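(* Let $p,n$ be positive integers and $c=\gcd(p,n)$. Then the quandle counting matrix of $\widetilde{\mathcal{T}(p,2)}$ with respect to the dihedral quandle $\mathbb{Z}_n$ is $\Phi^{M_n}_{\mathbb{Z}_n}(\widetilde{\mathcal{T}(p,2)})=cI_n$, where $I_n$ is the $n\times n$ identity matrix.
   Context: $\mathbb{Z}_n=\{0,\dots,n-1\}$ is the dihedral quandle ($x\triangleright y=2y-x$ mod $n$). For a $1$-linkoid $L$ with fundamental pointed quandle $P(L)$ and a finite quandle $X=\{x_1,\dots,x_k\}$, the quandle counting matrix $\Phi^{M_k}_X(L)$ is the $k\times k$ matrix with $(i,j)$ entry $|\hom(P(L),(X,x_i,x_j))|$ (basepoint-preserving homomorphisms). Here $P(\widetilde{\mathcal{T}(p,2)})=(Q,x_1,x_{p+1})$ with $Q=\langle x_1,\dots,x_{p+1}\mid x_p=x_2\triangleright x_{p+1},\ x_i=x_{i+2}\triangleright x_{i+1}\ (1\le i\le p-1)\rangle$, the fundamental pointed quandle of the $1$-linkoid of $(p,2)$-torus type. *)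

(* Defs.v *)
From mathcomp Require Import all_boot all_order all_algebra.
Set Implicit Arguments. Unset Strict Implicit. Unset Printing Implicit Defensive.

Definition dih_op (n : nat) (x y : 'I_n) : nat := (2 * y + (n - x)) %% n.
Lemma dih_op_lt n (x y : 'I_n) : dih_op x y < n.
Proof. by rewrite /dih_op ltn_mod; case: n x y => [[]|]. Qed.
Definition dih (n : nat) (x y : 'I_n) : 'I_n := Ordinal (dih_op_lt x y).

(* A coloring of the presentation
     Q = < x_1,...,x_{p+1} | x_p = x_2 |> x_{p+1},
                              x_i = x_{i+2} |> x_{i+1}  (1 <= i <= p-1) >
   by a quandle (X, op): an assignment of the generators (x_{k+1} is indexed
   by k : 'I_p.+1) satisfying the relations.  By the universal property of a
   presented quandle these are exactly the quandle homomorphisms Q -> X. *)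
Definition torus_coloring (X : finType) (op : X -> X -> X) (p : nat)
    (f : {ffun 'I_p.+1 -> X}) : bool :=
  let g k := f (inord k) in
  (g p.-1 == op (g 1) (g p)) &&
  [forall k : 'I_p.+1, (k < p.-1) ==> (g k == op (g k.+2) (g k.+1))].

(* |hom(P(T(p,2)~), (X, a, b))| : basepoint-preserving homs, basepoints x_1, x_{p+1} *)
Definition torus_hom_count (X : finType) (op : X -> X -> X) (p : nat) (a b : X)
  : nat :=
  #|[set f : {ffun 'I_p.+1 -> X} |
      [&& torus_coloring op f, f ord0 == a & f ord_max == b]]|.

(* Quandle counting matrix w.r.t. the dihedral quandle Z_n, with x_i = i-1. *)
Definition dih_counting_matrix (n p : nat) : 'M[nat]_n :=
  \matrix_(i < n, j < n) torus_hom_count (@dih n) p i j.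

(* Main.v *)
Require Import Defs.
From mathcomp Require Import all_boot all_order all_algebra zify ring.
Import GRing.Theory Num.Theory.
Lemma card_mult (c m : nat) (hm : 0 < m) :
  #|[set d : 'I_(c * m) | m %| d]| = c.
Proof.
have lt i : i < c -> i * m < c * m by move=> hi; rewrite ltn_pmul2r.
pose F (i : 'I_c) : 'I_(c * m) := Ordinal (lt i (ltn_ord i)).
have -> : [set d : 'I_(c * m) | m %| d] = [set F i | i in 'I_c].
  apply/setP => d; rewrite inE; apply/idP/imsetP.
  - move=> hd; have hq : d %/ m < c by rewrite ltn_divLR // ltn_ord.
    exists (Ordinal hq) => //; apply: val_inj => /=; by rewrite divnK.
  - by case=> i _ ->; rewrite /= dvdn_mull.
rewrite card_imset ?card_ord // => i j /(congr1 val) /= /eqP.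
by rewrite eqn_pmul2r // => /eqP; apply: val_inj.
Qed.

Lemma card_ann (p n : nat) (hn : 0 < n) :
  #|[set d : 'I_n | n %| p * d]| = gcdn p n.
Proof.
set c := gcdn p n.
have c0 : 0 < c by rewrite gcdn_gt0 hn orbT.
have En : n = n %/ c * c by rewrite divnK // dvdn_gcdr.
have Ep : p = p %/ c * c by rewrite divnK // dvdn_gcdl.
set n' := n %/ c in En *; set p' := p %/ c in Ep *.
have n'0 : 0 < n' by move: hn; rewrite En muln_gt0 => /andP[].
have cop : coprime n' p'.
  rewrite /coprime gcdnC; apply/eqP.
  have : c = gcdn p' n' * c by rewrite muln_gcdl -Ep -En.
  by rewrite -{1}(mul1n c) => /eqP; rewrite eqn_pmul2r // => /eqP <-.
have H : forall d, (n %| p * d) = (n' %| d).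
  move=> d; rewrite {1}En {1}Ep mulnAC dvdn_pmul2r //.
  exact: Gauss_dvdr.
have -> : [set d : 'I_n | n %| p * d] = [set d : 'I_n | n' %| d].
  by apply/setP => d; rewrite !inE H.
move: n'0; clearbody n'; clear H; move: En => ->.
rewrite mulnC => n'0.
exact: card_mult.
Qed.

Open Scope ring_scope.

Lemma modz_sub (x m : int) : (m %| x - (x %% m)%Z)%Z.
Proof.
have -> : x - (x %% m)%Z = (x %/ m)%Z * m by rewrite {1}(divz_eq x m); ring.
exact: dvdz_mull (dvdzz m).
Qed.

Lemma dihE n (x y z : 'I_n) :
  (dih x y == z) = (n%:Z %| x%:Z + z%:Z - 2 * y%:Z)%Z.
Proof.
have zlt : (z < n)%N := ltn_ord z.
have xlt : (x < n)%N := ltn_ord x.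
apply/idP/idP.
- move/eqP => <- /=; rewrite /dih_op -modz_nat.
  set E := (2 * y + (n - x))%N.
  have -> : x%:Z + (E %% n)%Z - 2 * y%:Z = (x%:Z + E - 2 * y%:Z) - (E%:Z - (E %% n)%Z) by ring.
  apply: rpredB; last exact: modz_sub.
  have -> : x%:Z + E%:Z - 2 * y%:Z = n by rewrite /E; lia.
  exact: dvdzz.
- move=> H; apply/eqP/val_inj => /=; rewrite /dih_op.
  apply/eqP; rewrite -eqz_nat -modz_nat.
  rewrite -[X in _ == X](@modz_small z n); last by rewrite lez_nat ltz_nat zlt.
  rewrite eqz_mod_dvd.
  have -> : (2 * y + (n - x))%N%:Z - z%:Z = n%:Z - (x%:Z + z%:Z - 2 * y%:Z) by lia.
  by apply: rpredB => //; exact: dvdzz.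
Qed.
Lemma ap (m : int) (g : nat -> int) p :
 (forall k, (k < p.-1)%N -> (m %| g k + g k.+2 - 2 * g k.+1)%Z) ->
 forall k, (k <= p)%N -> (m %| g k - g 0%N - k%:Z * (g 1%N - g 0%N))%Z.
Proof.
move=> H.
suff K : forall k, (k.+1 <= p)%N ->
  (m %| g k - g 0%N - k%:Z * (g 1%N - g 0%N))%Z /\
  (m %| g k.+1 - g 0%N - k.+1%:Z * (g 1%N - g 0%N))%Z.
  case=> [_|k kp]; last by case: (K k kp).
  by have -> : g 0%N - g 0%N - 0%:Z * (g 1%N - g 0%N) = 0 by ring.
elim=> [_|k IH kp].
  split.
    by have -> : g 0%N - g 0%N - 0%:Z * (g 1%N - g 0%N) = 0 by ring.
  by have -> : g 1%N - g 0%N - 1%:Z * (g 1%N - g 0%N) = 0 by ring.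
have [IH1 IH2] := IH (ltnW kp).
split => //.
have Hk := H k (ltac:(lia)).
have -> : g k.+2 - g 0%N - k.+2%:Z * (g 1%N - g 0%N) =
  (g k + g k.+2 - 2 * g k.+1) - (g k - g 0%N - k%:Z * (g 1%N - g 0%N))
  + 2 * (g k.+1 - g 0%N - k.+1%:Z * (g 1%N - g 0%N)).
  rewrite !intS; ring.
by apply: rpredD; [apply: rpredB | apply: dvdz_mull].
Qed.
Lemma ord_eq_dvd n (x y : 'I_n) : (n%:Z %| x%:Z - y%:Z)%Z -> x = y.
Proof.
rewrite -eqz_mod_dvd !modz_small; last first.
- by rewrite lez_nat ltz_nat ltn_ord.
- by rewrite lez_nat ltz_nat ltn_ord.
by move/eqP => [] /val_inj.
Qed.

Lemma modz_subN (x : nat) (m : nat) : (m%:Z %| (x %% m)%N%:Z - x%:Z)%Z.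
Proof.
rewrite -modz_nat -rpredN.
have -> : - ((x %% m)%Z - x%:Z) = x%:Z - (x%:Z %% m%:Z)%Z by ring.
exact: modz_sub.
Qed.

Section Main.
Variables (p n : nat) (hp : (0 < p)%N) (hn : (0 < n)%N).

Definition G (f : {ffun 'I_p.+1 -> 'I_n}) (k : nat) : int := (f (inord k) : nat)%:Z.

Lemma col_P f : torus_coloring (@dih n) f ->
  (forall k, (k <= p)%N -> (n%:Z %| G f k - G f 0 - k%:Z * (G f 1 - G f 0))%Z) /\
  (n%:Z %| p%:Z * (G f 1 - G f 0))%Z.
Proof.
move=> /andP [h1 /forallP h2].
have hrel : forall k, (k < p.-1)%N -> (n%:Z %| G f k + G f k.+2 - 2 * G f k.+1)%Z.
  move=> k kp; have := h2 (inord k).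
  rewrite (inordK (_ : (k < p.+1)%N)); last by lia.
  move=> /implyP /(_ kp); rewrite eq_sym dihE.
  by rewrite /G [X in X - _]addrC.
have P := @ap _ (G f) p hrel.
split => //.
move: h1; rewrite eq_sym dihE => h1.
have hp1 : (p.-1)%:Z = p%:Z - 1 by lia.
have -> : p%:Z * (G f 1 - G f 0) =
   (G f p.-1 - G f 0 - (p.-1)%:Z * (G f 1 - G f 0))
 + (G f 1 - G f 0 - 1%:Z * (G f 1 - G f 0))
 - 2 * (G f p - G f 0 - p%:Z * (G f 1 - G f 0))
 - ((f (inord 1) : nat)%:Z + (f (inord p.-1) : nat)%:Z - 2 * (f (inord p) : nat)%:Z).
  by rewrite hp1 /G; ring.
apply: rpredB => //; apply: rpredB; last by apply: dvdz_mull; apply: P.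
by apply: rpredD; apply: P => //; lia.
Qed.


Definition hh (f : {ffun 'I_p.+1 -> 'I_n}) : 'I_n :=
  Ordinal (ltn_pmod ((f (inord 1) : nat) + (n - f (inord 0))) hn).

Lemma hhE f : (n%:Z %| G f 1 - G f 0 - (hh f : nat)%:Z)%Z.
Proof.
rewrite /hh /=.
set X := ((f (inord 1) : nat) + (n - f (inord 0)))%N.
have hX : X%:Z = G f 1 + n%:Z - G f 0.
  by rewrite /X /G; have := ltn_ord (f (inord 0)); lia.
have -> : G f 1 - G f 0 - ((X %% n)%N)%:Z = - (((X %% n)%N)%:Z - X%:Z) - n%:Z.
  by rewrite hX; ring.
by apply: rpredB; [rewrite rpredN; exact: modz_subN | exact: dvdzz].
Qed.

Lemma colQ f : torus_coloring (@dih n) f ->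
  forall k, (k <= p)%N -> (n%:Z %| G f k - G f 0 - k%:Z * (hh f : nat)%:Z)%Z.
Proof.
move=> /col_P [P _] k kp.
have -> : G f k - G f 0 - k%:Z * (hh f : nat)%:Z =
  (G f k - G f 0 - k%:Z * (G f 1 - G f 0)) + k%:Z * (G f 1 - G f 0 - (hh f : nat)%:Z).
  by ring.
by apply: rpredD; [exact: P | apply: dvdz_mull; exact: hhE].
Qed.


Definition FF (i d : 'I_n) : {ffun 'I_p.+1 -> 'I_n} :=
  [ffun k : 'I_p.+1 => Ordinal (ltn_pmod ((i : nat) + k * d) hn)].

Lemma FFG (i d : 'I_n) k : (k <= p)%N -> G (FF i d) k = (((i : nat) + k * d) %% n)%N%:Z.
Proof. by move=> kp; rewrite /G ffunE /= inordK. Qed.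

Lemma FFc (i d : 'I_n) k : (k <= p)%N ->
  (n%:Z %| G (FF i d) k - (i%:Z + k%:Z * (d : nat)%:Z))%Z.
Proof.
move=> kp; rewrite FFG //.
have -> : i%:Z + k%:Z * (d : nat)%:Z = ((i : nat) + k * d)%N%:Z by lia.
exact: modz_subN.
Qed.

Lemma FF_col (i d : 'I_n) : (n %| p * d)%N -> torus_coloring (@dih n) (FF i d).
Proof.
move=> hd.
have hdz : (n%:Z %| p%:Z * (d : nat)%:Z)%Z.
  by rewrite -PoszM dvdzE.
apply/andP; split.
- rewrite eq_sym dihE.
  have hp1 : (p.-1)%:Z = p%:Z - 1 by lia.
  have -> : ((FF i d) (inord 1) : nat)%:Z + ((FF i d) (inord p.-1) : nat)%:Z
            - 2 * ((FF i d) (inord p) : nat)%:Z =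
    (G (FF i d) 1 - (i%:Z + 1%:Z * (d : nat)%:Z))
    + (G (FF i d) p.-1 - (i%:Z + (p.-1)%:Z * (d : nat)%:Z))
    - 2 * (G (FF i d) p - (i%:Z + p%:Z * (d : nat)%:Z))
    - p%:Z * (d : nat)%:Z.
    by rewrite hp1 /G; ring.
  apply: rpredB => //; apply: rpredB; last by apply: dvdz_mull; apply: FFc.
  by apply: rpredD; apply: FFc; lia.
- apply/forallP => k; apply/implyP => hk; rewrite eq_sym dihE.
  have -> : ((FF i d) (inord k.+2) : nat)%:Z + ((FF i d) (inord k) : nat)%:Z
            - 2 * ((FF i d) (inord k.+1) : nat)%:Z =
    (G (FF i d) k.+2 - (i%:Z + (k.+2)%:Z * (d : nat)%:Z))
    + (G (FF i d) k - (i%:Z + k%:Z * (d : nat)%:Z))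
    - 2 * (G (FF i d) k.+1 - (i%:Z + (k.+1)%:Z * (d : nat)%:Z)).
    by rewrite /G !intS; ring.
  apply: rpredB; last by apply: dvdz_mull; apply: FFc; lia.
  by apply: rpredD; apply: FFc; lia.
Qed.

Lemma FF0 (i d : 'I_n) : FF i d ord0 = i.
Proof. by apply: val_inj; rewrite ffunE /= mul0n addn0 modn_small. Qed.

Lemma FFmax (i d : 'I_n) : (n %| p * d)%N -> FF i d ord_max = i.
Proof.
move=> hd; apply: val_inj; rewrite ffunE /=.
by rewrite -(divnK hd) addnC modnMDl modn_small.
Qed.

Lemma FFh (i d : 'I_n) : hh (FF i d) = d.
Proof.
apply: val_inj; rewrite /hh /= !ffunE /= !inordK //.
rewrite mul0n addn0 mul1n (modn_small (ltn_ord i)) modnDml.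
have -> : ((i : nat) + d + (n - i))%N = (d + n)%N by have := ltn_ord i; lia.
by rewrite modnDr modn_small.
Qed.

End Main.
Arguments G {p n}.
Arguments hh {p n}.
Arguments colQ {p n}.
Arguments col_P {p n}.
Arguments FF {p n}.
Arguments FF_col {p n}.
Arguments FF0 {p n}.
Arguments FFmax {p n}.
Arguments FFh {p n}.

Lemma G0 p n (f : {ffun 'I_p.+1 -> 'I_n}) : G f 0 = (f ord0 : nat)%:Z.
Proof. by rewrite /G; congr (Posz (nat_of_ord (f _))); apply: val_inj; rewrite /= inordK. Qed.

Lemma Gp p n (f : {ffun 'I_p.+1 -> 'I_n}) : G f p = (f ord_max : nat)%:Z.
Proof. by rewrite /G; congr (Posz (nat_of_ord (f _))); apply: val_inj; rewrite /= inordK. Qed.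

Lemma main_aux (p n : nat) (hp : (0 < p)%N) (hn : (0 < n)%N) :
  dih_counting_matrix n p = ((gcdn p n)%:M)%R.
Proof.
apply/matrixP => i j; rewrite !mxE /torus_hom_count.
case: eqVneq => [<-|hij] /=.
  set S := [set f : {ffun 'I_p.+1 -> 'I_n} | _].
  rewrite -(card_in_imset (f := hh hn)); last first.
    move=> f1 f2; rewrite !inE => /and3P [c1 /eqP e1 _] /and3P [c2 /eqP e2 _] eh.
    apply/ffunP => k; rewrite -(inord_val k); apply: ord_eq_dvd.
    have q1 := colQ hp hn _ c1 _ (ltn_ord k); have q2 := colQ hp hn _ c2 _ (ltn_ord k).
    rewrite !G0 e1 e2 eh in q1 q2.
    have -> : (f1 (inord k) : nat)%:Z - (f2 (inord k) : nat)%:Z =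
      (G f1 k - i%:Z - k%:Z * (hh hn f2 : nat)%:Z) - (G f2 k - i%:Z - k%:Z * (hh hn f2 : nat)%:Z).
      by rewrite /G; ring.
    exact: rpredB.
  rewrite -(@card_ann p n hn) mulr1n.
  suff -> : [set hh hn x | x in S] = [set d : 'I_n | (n %| p * d)%N] by [].
  apply/setP => d; rewrite inE; apply/imsetP/idP.
  - case=> f; rewrite inE => /and3P [c _ _] ->.
    have [_ pd] := col_P hp hn _ c.
    Show.
    have hz : (n%:Z %| p%:Z * (hh hn f : nat)%:Z)%Z.
      have -> : p%:Z * (hh hn f : nat)%:Z = p%:Z * (G f 1 - G f 0)
          - p%:Z * (G f 1 - G f 0 - (hh hn f : nat)%:Z) by ring.
      by apply: rpredB => //; apply: dvdz_mull; exact: hhE.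
    by move: hz; rewrite -PoszM dvdzE.
  - move=> hd; exists (FF hn i d); last by rewrite (FFh hp).
    by rewrite inE (FF_col hp) // FF0 FFmax // !eqxx.
apply/eqP; rewrite mulr0n cards_eq0; apply/eqP/setP => f; rewrite inE in_set0.
apply/negP => /and3P [c /eqP e0 /eqP em].
have [P pd] := col_P hp hn _ c.
have := P p (leqnn p); rewrite Gp G0 em e0 => h.
rewrite G0 e0 in pd.
have : (n%:Z %| j%:Z - i%:Z)%Z.
  have -> : j%:Z - i%:Z = (j%:Z - i%:Z - p%:Z * (G f 1 - i%:Z)) + p%:Z * (G f 1 - i%:Z) by ring.
  by apply: rpredD.
by move/ord_eq_dvd => E; rewrite E eqxx in hij.
Qed.
Close Scope ring_scope.
Theorem corollary6p7 (p n : nat) (hp : 0 < p) (hn : 0 < n) :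
  dih_counting_matrix n p = ((gcdn p n)%:M)%R.
Proof. exact: main_aux. Qed.
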